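(* Regardless of whether the agent is myopic or patient, for any $\varepsilon>0$ there is a dynamic environment in which the principal's utility $u_P^M(\emptyset)$ under an optimal memoryless IC mechanism is at most an $\varepsilon$ fraction of the principal's optimal utility (the supremum of $u_P^M(\emptyset)$ over all IC dynamic mechanisms).
   Context: A dynamic environment consists of a time horizon $T\in\mathbb N$, a finite state space $\mathcal S$, a finite action space $\mathcal A$, valuation functions $v^P_t,v^A_t:\mathcal S\times\mathcal A\to\mathbb R$ ($t\in[T]$) of the principal and the agent, an initial distribution $P_0\in\Delta(\mathcal S)$, and transition operators $P_t:\mathcal S\times\mathcal A\to\Delta(\mathcal S)$ with $P_t(s,a,s')$ the probability of next state $s'$ after action $a$ in state $s$ at time $t$. For $t\ge1$, $\mathcal H_t$ is the set of sequences $(s_1,a_1,\dots,s_t,a_t)$; $\mathcal H_0=\{\emptyset\}$; $\mathcal H=\bigcup_{t=0}^{T-1}\mathcal H_t$; $h+(s,a)$ appends $(s,a)$. A mechanism $M=(\pi,p)$ has $\pi:\mathcal H\times\mathcal S\to\Delta(\mathcal A)$ and payments $p:\mathcal H\times\mathcal S\to\mathbb R$ (agent to principal). $M$ is memoryless if $\pi(h,s)$ and $p(h,s)$ depend only on $|h|$ and $s$. Principal's onward utility: $u_P^M(h,s)=\sum_a\pi(h,s,a)\big(v^P_{|h|+1}(s,a)+\sum_{s'}P_{|h|+1}(s,a,s')u_P^M(h+(s,a),s')\big)+p(h,s)$ (zero when $|h|=T$), $u_P^M(\emptyset)=\sum_sP_0(s)u_P^M(\emptyset,s)$. A reporting strategy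 $r:\mathcal H\times\mathcal S\to\mathcal S$ induces for $h=(s_1,a_1,\dots,s_t,a_t)$ the reported history $r(h)=(s'_1,a_1,\dots,s'_t,a_t)$ with $s'_i=r((s_1,a_1,\dots,s_{i-1},a_{i-1}),s_i)$. Patient agent: $u_A^M(h,s)=\sum_a\pi(h,s,a)\big(v^A_{|h|+1}(s,a)+\sum_{s'}P_{|h|+1}(s,a,s')u_A^M(h+(s,a),s')\big)-p(h,s)$ and $u_A^{M,r}(h,s)=\sum_a\pi(r(h),r(h,s),a)\big(v^A_{|h|+1}(s,a)+\sum_{s'}P_{|h|+1}(s,a,s')u_A^{M,r}(h+(s,a),s')\big)-p(r(h),r(h,s))$ (both zero when $|h|=T$); $M$ is IC if $\sum_sP_0(s)u_A^M(\emptyset,s)\ge\sum_sP_0(s)u_A^{M,r}(\emptyset,s)$ for all $r$. Myopic agent: $u_A^M(h,s)=\sum_a\pi(h,s,a)v^A_{|h|+1}(s,a)-p(h,s)$, $u_A^{M,r}(h,s)=\sum_a\pi(r(h),r(h,s),a)v^A_{|h|+1}(s,a)-p(r(h),r(h,s))$; $M$ is IC if for all $h\in\mathcal H,s\in\mathcal S$ and every $r$ with $r(h',s')=s'$ whenever $|h'|<|h|$, $u_A^M(h,s)\ge u_A^{M,r}(h,s)$. *)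

(* Defs.v *)
From HB Require Import structures.
From mathcomp Require Import all_boot all_order all_algebra.
From mathcomp Require Import reals.
Unset Printing Implicit Defensive.
Import Order.TTheory GRing.Theory Num.Theory.
Local Open Scope ring_scope.

Definition is_distr {R : realType} {X : finType} (f : X -> R) : Prop :=
  (forall x, 0 <= f x) /\ \sum_(x : X) f x = 1.

(* Dynamic environment.  Time indices t are naturals; only t in [1, T] are
   ever used.  Ptr t s a s' is the probability of s' after a in s at time t. *)
Record env (R : realType) := Env {
  T : nat;
  St : finType;
  Ac : finType;
  vP : nat -> St -> Ac -> R;
  vA : nat -> St -> Ac -> R;
  P0 : St -> R;
  Ptr : nat -> St -> Ac -> St -> R }.
Arguments T {R} e.
Arguments St {R} e.
Arguments Ac {R} e.
Arguments vP {R} e _ _ _.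
Arguments vA {R} e _ _ _.
Arguments P0 {R} e _.
Arguments Ptr {R} e _ _ _ _.

Definition valid_env {R : realType} (E : env R) : Prop :=
  is_distr (P0 E) /\ forall t s a, (1 <= t <= T E)%N -> is_distr (Ptr E t s a).

(* Histories (s_1,a_1,...,s_t,a_t) are sequences of pairs, oldest first;
   h + (s,a) is [rcons h (s,a)]; |h| is [size h]. H = histories of size < T. *)
Definition hist {R : realType} (E : env R) := seq (St E * Ac E).

Record mech {R : realType} (E : env R) := Mech {
  pi : hist E -> St E -> Ac E -> R;
  pay : hist E -> St E -> R }.
Arguments pi {R E} m _ _ _.
Arguments pay {R E} m _ _.

Definition valid_mech {R : realType} {E : env R} (M : mech E) : Prop :=
  forall (h : hist E) s, (size h < T E)%N -> is_distr (pi M h s).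

Definition memoryless {R : realType} {E : env R} (M : mech E) : Prop :=
  forall (h h' : hist E) s, (size h < T E)%N -> size h = size h' ->
    pi M h s = pi M h' s /\ pay M h s = pay M h' s.

(* Onward utilities computed by recursion on the number k = T - |h| of
   remaining steps. *)
Fixpoint uP_rec {R : realType} {E : env R} (M : mech E) (k : nat)
    (h : hist E) (s : St E) : R :=
  match k with
  | O => 0
  | k'.+1 =>
    \sum_(a : Ac E) pi M h s a *
       (vP E (size h).+1 s a +
        \sum_(s' : St E) Ptr E (size h).+1 s a s' * uP_rec M k' (rcons h (s, a)) s')
    + pay M h s
  end.

Definition uP {R : realType} {E : env R} (M : mech E) (h : hist E) s : R :=
  uP_rec M (T E - size h) h s.

Definition uP0 {R : realType} {E : env R} (M : mech E) : R :=
  \sum_(s : St E) P0 E s * uP M [::] s.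

Definition strategy {R : realType} (E : env R) := hist E -> St E -> St E.

(* reported history r(h): s'_i = r((s_1,a_1,...,s_{i-1},a_{i-1}), s_i) *)
Fixpoint rep_aux {R : realType} {E : env R} (r : strategy E) (pre h : hist E)
  : hist E :=
  match h with
  | [::] => [::]
  | (s, a) :: h' => (r pre s, a) :: rep_aux r (rcons pre (s, a)) h'
  end.

Definition rep {R : realType} {E : env R} (r : strategy E) (h : hist E) : hist E :=
  rep_aux r [::] h.

Fixpoint uA_rec {R : realType} {E : env R} (M : mech E) (k : nat)
    (h : hist E) (s : St E) : R :=
  match k with
  | O => 0
  | k'.+1 =>
    \sum_(a : Ac E) pi M h s a *
       (vA E (size h).+1 s a +
        \sum_(s' : St E) Ptr E (size h).+1 s a s' * uA_rec M k' (rcons h (s, a)) s')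
    - pay M h s
  end.

Fixpoint uAr_rec {R : realType} {E : env R} (M : mech E) (r : strategy E)
    (k : nat) (h : hist E) (s : St E) : R :=
  match k with
  | O => 0
  | k'.+1 =>
    \sum_(a : Ac E) pi M (rep r h) (r h s) a *
       (vA E (size h).+1 s a +
        \sum_(s' : St E) Ptr E (size h).+1 s a s' * uAr_rec M r k' (rcons h (s, a)) s')
    - pay M (rep r h) (r h s)
  end.

Definition uA_pat {R : realType} {E : env R} (M : mech E) h s : R :=
  uA_rec M (T E - size h) h s.
Definition uAr_pat {R : realType} {E : env R} (M : mech E) r h s : R :=
  uAr_rec M r (T E - size h) h s.

Definition IC_patient {R : realType} {E : env R} (M : mech E) : Prop :=
  forall r : strategy E,
    \sum_(s : St E) P0 E s * uAr_pat M r [::] s <=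
    \sum_(s : St E) P0 E s * uA_pat M [::] s.

Definition uA_myo {R : realType} {E : env R} (M : mech E) (h : hist E) s : R :=
  \sum_(a : Ac E) pi M h s a * vA E (size h).+1 s a - pay M h s.

Definition uAr_myo {R : realType} {E : env R} (M : mech E) (r : strategy E)
    (h : hist E) s : R :=
  \sum_(a : Ac E) pi M (rep r h) (r h s) a * vA E (size h).+1 s a
  - pay M (rep r h) (r h s).

Definition IC_myopic {R : realType} {E : env R} (M : mech E) : Prop :=
  forall (h : hist E) (s : St E) (r : strategy E), (size h < T E)%N ->
    (forall (h' : hist E) s', (size h' < size h)%N -> r h' s' = s') ->
    uAr_myo M r h s <= uA_myo M h s.

(* Individual rationality: without it every
   constant payment is IC and the principal's optimum is +infinity. *)
Definition IR_patient {R : realType} {E : env R} (M : mech E) : Prop :=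
  0 <= \sum_(s : St E) P0 E s * uA_pat M [::] s.

Definition IR_myopic {R : realType} {E : env R} (M : mech E) : Prop :=
  forall (h : hist E) s, (size h < T E)%N -> 0 <= uA_myo M h s.

Definition feasible {R : realType} {E : env R} (myopic : bool) (M : mech E)
  : Prop :=
  valid_mech M /\
  (if myopic then IC_myopic M /\ IR_myopic M else IC_patient M /\ IR_patient M).

(* Main.v *)
Require Import Defs.
From HB Require Import structures.
From mathcomp Require Import all_boot all_order all_algebra.
From mathcomp Require Import reals.
From mathcomp Require Import lra.
Import Order.TTheory GRing.Theory Num.Theory.
Local Open Scope ring_scope.

Section S.
Variable R : realType.

Definition E0 : env R := {|
  T := 2%N; St := bool; Ac := bool;
  vP := fun t s a => if (t == 2)%N && a && ~~ s then -4 else 0;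
  vA := fun t s a => if (t == 1)%N then (if ~~ s && a then -1 else 0)
                     else if a then (if s then 1 else 2) else 0;
  P0 := fun _ => 2^-1;
  Ptr := fun _ s _ s' => if s' == s then 1 else 0 |}.

Definition Mg : mech E0 := @Mech R E0
  (fun h s a => if h is (_, a1) :: _ then (if a == a1 then 1 else 0)
                     else (if a == s then 1 else 0))
  (fun h s => if h is (_, a1) :: _ then (if a1 then 1 else 0) else 0).

Lemma sumS (F : St E0 -> R) : \sum_(i : St E0) F i = F true + F false.
Proof. exact: big_bool. Qed.
Lemma sumA (F : Ac E0 -> R) : \sum_(i : Ac E0) F i = F true + F false.
Proof. exact: big_bool. Qed.

Lemma validE : valid_env E0.
Proof.
split.
  split => [x|]; first by rewrite /=; lra.
  rewrite big_bool /=; lra.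
move=> t s a _; split => [x|] /=; first by case: ifP => _; lra.
by rewrite big_bool /=; case: s => /=; lra.
Qed.

Lemma uP0g : uP0 Mg = 2^-1.
Proof.
rewrite /uP0 /uP /= !sumS /=.
lra.
Qed.


Lemma feasg (myopic : bool) : feasible myopic Mg.
Proof.
split.
  move=> [|[x a1] h] s _; split => [a|] /=.
  - by case: ifP => _; lra.
  - by rewrite sumS /=; case: s => /=; lra.
  - by case: ifP => _; lra.
  - by rewrite sumS /=; case: a1 => /=; lra.
case: myopic; split.
- move=> [|[x a1] [|y h]] s r //= _ _.
    rewrite /uAr_myo /uA_myo /= !sumS /=.
    by case: (r [::] s); case: s => /=; lra.
- move=> [|[x a1] [|y h]] s //= _.
    rewrite /uA_myo /= !sumS /=.
    by case: s => /=; lra.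
  rewrite /uA_myo /= !sumS /=.
  by case: a1; case: s => /=; lra.
- move=> r; rewrite /uAr_pat /uA_pat /rep /= !sumS /=.
  by case: (r [::] true); case: (r [::] false) => /=; lra.
- rewrite /IR_patient /uA_pat /= !sumS /=; lra.
Qed.


Lemma boundM (myopic : bool) (M : mech E0) :
  feasible myopic M -> memoryless M -> uP0 M <= 0.
Proof.
move=> [Hv Hic] Hmem.
pose h0 : hist E0 := [:: (false, false)].
have Hm : forall s a s', Defs.pi M [:: (s,a)] s' = Defs.pi M h0 s' /\ pay M [:: (s,a)] s' = pay M h0 s'.
  by move=> s a s'; apply: Hmem.
have [x Hx] : exists x : bool -> bool -> R, forall s a s' b, Defs.pi M [:: (s,a)] s' b = x s' b.
  by exists (Defs.pi M h0) => s a s' b; rewrite (Hm s a s').1.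
have [y Hy] : exists y : bool -> R, forall s a s', pay M [:: (s,a)] s' = y s'.
  by exists (pay M h0) => s a s'; rewrite (Hm s a s').2.
have Hx0 : forall s b, 0 <= x s b.
  by move=> s b; rewrite -(Hx false false); case: (Hv h0 s erefl) => H _; apply: H.
have Hx1 : forall s, x s true + x s false = 1.
  by move=> s; rewrite -!(Hx false false); case: (Hv h0 s erefl) => _; rewrite sumS.
have Hp0 : forall s b, 0 <= Defs.pi M [::] s b.
  by move=> s b; case: (Hv [::] s erefl) => H _; apply: H.
have Hp1 : forall s, Defs.pi M [::] s false = 1 - Defs.pi M [::] s true.
  by move=> s; case: (Hv [::] s erefl) => _; rewrite sumS => H; lra.
have HF := Hp1 false; have HT := Hp1 true.
have := Hx0 true true; have := Hx0 false true.
have := Hx1 true; have := Hx1 false.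
have := Hp0 false true; have := Hp0 true true.
rewrite /uP0 /uP /= !sumS /= !Hx !Hy HF HT.
case: myopic Hic => [[IC IR]|[IC IR]].
- have IR0T := IR [::] true erefl; have IR0F := IR [::] false erefl.
  have IR1T := IR h0 true erefl; have IR1F := IR h0 false erefl.
  pose r : strategy E0 := fun h' s' => if h' is [::] then s' else ~~ s'.
  have Hr : forall h' s', (size h' < size h0)%N -> r h' s' = s'.
    by move=> [|? ?] s'.
  have ICT := IC h0 true r erefl Hr; have ICF := IC h0 false r erefl Hr.
  move: IR0T IR0F IR1T IR1F ICT ICF.
  rewrite /uA_myo /uAr_myo /rep /= !sumS /= !Hx !Hy HF HT.
  move=> *; lra.
- pose r (s0 : bool) : strategy E0 :=
    fun h' s' => if h' is [::] then s' else (if s' == s0 then ~~ s' else s').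
  have ICT := IC (r true); have ICF := IC (r false).
  move: IR ICT ICF.
  rewrite /IR_patient /uA_pat /uAr_pat /rep /= !sumS /= !Hx !Hy HF HT.
  move=> *; lra.
Qed.


End S.

Theorem theorem4 (R : realType) (myopic : bool) (eps : R) :
  0 < eps ->
  exists E : env R, valid_env E /\
    (exists M : mech E, feasible myopic M /\ 0 < uP0 M) /\
    (forall M : mech E, feasible myopic M -> memoryless M ->
       forall c : R, eps * c < uP0 M ->
         exists M' : mech E, feasible myopic M' /\ c < uP0 M').
Proof.
move=> he.
exists (E0 R); split; first exact: validE.
split; first by exists (Mg R); split; [exact: feasg | rewrite uP0g; lra].
move=> M HM Hmem c Hc.
exists (Mg R); split; first exact: feasg.
have Hb := @boundM R myopic M HM Hmem.
rewrite uP0g.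
have : eps * c < 0 by lra.
rewrite pmulr_rlt0 //; lra.
Qed.
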